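(* For every graph $G$ and every integer $r\ge 2$, $$\mathrm{glm}(G)\le \mathrm{had}(G\square K_2)\le 3\,\mathrm{had}_r(G),$$ and if $r$ is even then $$\mathrm{glm}(G)\le \mathrm{had}(G\square K_2)\le 2\,\mathrm{had}_r(G)\le 2\,\mathrm{had}_f(G).$$
   Context: $\mathrm{had}(H)$ is the largest $t$ such that $K_t$ is a minor of $H$. $G\square K_2$ is the Cartesian product: two disjoint copies of $G$ with an edge between each pair of corresponding vertices. A grid-like-minor of order $t$ in $G$ is a set $\mathcal P$ of paths in $G$ whose intersection graph (vertices $\mathcal P$, two paths adjacent if they share a vertex) is bipartite and contains a $K_t$-minor; $\mathrm{glm}(G)$ is the maximum order of a grid-like-minor of $G$. Two subgraphs touch if they share a vertex or an edge joins them; a bramble is a set of pairwise touching connected subgraphs. The fractional Hadwiger number $\mathrm{had}_f(G)$ is the maximum $h$ for which there is a bramble $\mathcal B$ in $G$ and a weight function $w:\mathcal B\to\mathbb R_{\ge0}$ with $h=\sum_{X\in\mathcal B}w(X)$ and, for each vertex $v$, the total weight of elements of $\mathcal B$ containing $v$ at most $1$. For a positive integer $r$, $\mathrm{had}_r(G)$ is defined identically except that all weights must be multiples of $\frac1r$. *)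

(* Defs.v *)
From HB Require Import structures.
From mathcomp Require Import all_boot all_order all_algebra.
From mathcomp Require Import boolp classical_sets reals.
Set Implicit Arguments. Unset Strict Implicit. Unset Printing Implicit Defensive.
Import Order.TTheory GRing.Theory Num.Theory.

(* A (finite simple) graph is given by a vertex type T : finType and a
   symmetric irreflexive adjacency relation e : rel T. *)

Section Graphs.
Variables (T : finType) (e : rel T).

Definition connected_set (X : {set T}) : bool :=
  (X != finset.set0) &&
  [forall x in X, forall y in X,
     connect (fun a b => [&& e a b, a \in X & b \in X]) x y].

Definition Kt_minor (t : nat) : bool :=
  [exists f : {ffun 'I_t -> {set T}},
     [forall i, connected_set (f i)] &&
     [forall i, forall j, (i != j) ==>
        ([disjoint f i & f j] &&
         [exists x in f i, exists y in f j, e x y])]].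

(* had(G): largest t with a K_t minor (such t is at most #|T|). *)
Definition had : nat := \max_(t < #|T|.+1 | Kt_minor t) t.

Definition touch (X Y : {set T}) : bool :=
  [exists x in X, exists y in Y, (x == y) || e x y].

Definition bramble (B : {set {set T}}) : bool :=
  [forall X in B, connected_set X] && [forall X in B, forall Y in B, touch X Y].

Definition gpath (p : seq T) : bool :=
  if p is x :: s then uniq p && path e x s else false.

End Graphs.

Definition boxK2 (T : finType) (e : rel T) : rel (T * bool) :=
  fun p q => ((p.2 == q.2) && e p.1 q.1) || ((p.1 == q.1) && (p.2 != q.2)).

(* A grid-like minor of order t: a (finite) set of paths, here indexed
   injectively by 'I_m, whose intersection graph is bipartite and has a
   K_t minor. *)
Definition has_glm (T : finType) (e : rel T) (t : nat) : Prop :=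
  exists (m : nat) (P : 'I_m -> seq T),
    injective P /\ (forall i, gpath e (P i)) /\
    let adj : rel 'I_m := fun i j => (i != j) && has (fun x => x \in P j) (P i) in
    (exists c : 'I_m -> bool, forall i j, adj i j -> c i != c j) /\
    Kt_minor adj t.

Local Open Scope ring_scope.

Definition glm (R : realType) (T : finType) (e : rel T) : R :=
  sup [set x : R | exists t : nat, has_glm e t /\ x = t%:R].

Definition bramble_weight (R : realType) (T : finType) (e : rel T)
  (B : {set {set T}}) (w : {set T} -> R) : Prop :=
  bramble e B /\ (forall X, X \in B -> 0 <= w X) /\
  (forall v : T, \sum_(X in B | v \in X) w X <= 1).

Definition had_f (R : realType) (T : finType) (e : rel T) : R :=
  sup [set h : R | exists (B : {set {set T}}) (w : {set T} -> R),
         bramble_weight e B w /\ h = \sum_(X in B) w X].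

Definition had_r (R : realType) (T : finType) (e : rel T) (r : nat) : R :=
  sup [set h : R | exists (B : {set {set T}}) (w : {set T} -> R),
         bramble_weight e B w /\
         (forall X, X \in B -> exists k : nat, w X = k%:R / r%:R) /\
         h = \sum_(X in B) w X].

(* Main.v *)
Require Import Defs.
From HB Require Import structures.
From mathcomp Require Import all_boot all_order all_algebra.
From mathcomp Require Import boolp classical_sets reals.
From mathcomp Require Import zify.
Import Order.TTheory GRing.Theory Num.Theory.
Set Implicit Arguments. Unset Strict Implicit.

Lemma conn_map (T U : finType) (e : rel T) (E : rel U) (f : T -> U) :
  (forall a b, e a b -> connect E (f a) (f b)) ->
  forall x y, connect e x y -> connect E (f x) (f y).
Proof.
move=> H x y /connectP [p]; elim: p x => [|z p IH] x /=.
  by move=> _ ->; exact: connect0.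
case/andP=> exz pz ey; apply: connect_trans (H _ _ exz) _; exact: IH.
Qed.

Lemma path_conn2 (T U : finType) (e : rel T) (E : rel U) (h : T -> U) x s :
  path e x s ->
  (forall a b, a \in x :: s -> b \in x :: s -> e a b -> E (h a) (h b) && E (h b) (h a)) ->
  forall y, y \in x :: s -> connect E (h x) (h y) && connect E (h y) (h x).
Proof.
elim: s x => [|z s IH] x /=.
  by move=> _ _ y; rewrite inE => /eqP ->; rewrite connect0.
case/andP=> exz pz H y; rewrite inE => /orP [/eqP -> | ys].
  by rewrite connect0.
have /andP [E1 E2] : E (h x) (h z) && E (h z) (h x).
  by apply: H => //; rewrite !inE eqxx ?orbT.
have H' : forall a b, a \in z :: s -> b \in z :: s -> e a b -> E (h a) (h b) && E (h b) (h a).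
  by move=> a b Ha Hb; apply: H; rewrite inE ?Ha ?Hb orbT.
have /andP [C1 C2] := IH z pz H' y ys.
apply/andP; split.
  exact: connect_trans (connect1 E1) C1.
exact: connect_trans C2 (connect1 E2).
Qed.

Lemma Kt_le_card (T : finType) (e : rel T) t : Kt_minor e t -> (t <= #|T|)%N.
Proof.
case/existsP=> f /andP [/forallP Hc /forallP Hd].
have ne i : {x | x \in f i}.
  have := Hc i; case/andP=> /set0Pn Hn _.
  by apply: sigW.
pose g i := sval (ne i).
have -> : t = #|'I_t| by rewrite card_ord.
apply: (@leq_card _ _ g) => i j Hij.
apply/eqP; apply/negPn/negP => nij.
have /andP [dij _] := implyP (forallP (Hd i) j) nij.
have gi : g i \in f i := svalP (ne i).
have gj : g j \in f j := svalP (ne j).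
by move: dij => /disjoint_setI0 /setP /(_ (g i)); rewrite inE gi Hij gj inE.
Qed.

Lemma Kt_le_had (T : finType) (e : rel T) t : Kt_minor e t -> (t <= had e)%N.
Proof.
move=> H; have Ht := Kt_le_card H.
rewrite /had.
exact: (@leq_bigmax_cond _ (fun i : 'I_(#|T|.+1) => Kt_minor e i) (fun i => val i) (Ordinal (n:=#|T|.+1) (m:=t) Ht)).
Qed.

Lemma had_attained (T : finType) (e : rel T) : Kt_minor e (had e).
Proof.
rewrite /had.
have h0 : (0 < #|[pred i : 'I_(#|T|.+1) | Kt_minor e i]|)%N.
  apply/card_gt0P; exists ord0; rewrite inE /=.
  apply/existsP; exists [ffun i : 'I_0 => (finset.set0 : {set T})]; apply/andP; split;
   apply/forallP => [[]] //.
have [i0 Hi0 ->] := @eq_bigmax_cond _ _ (fun i : 'I_(#|T|.+1) => val i) h0.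
by move: Hi0; rewrite inE.
Qed.

Lemma glm_part (T : finType) (e : rel T) (esym : symmetric e) t :
  has_glm e t -> Kt_minor (boxK2 e) t.
Proof.
case=> m [P [injP [gP [[c Hc] Kt]]]].
set adj := (fun i j : 'I_m => (i != j) && has (fun x => x \in P j) (P i)) in Hc Kt.
have share p q : adj p q -> exists2 v, v \in P p & v \in P q.
  by case/andP=> _ /hasP [v Hv Hq]; exists v.
case/existsP: Kt => f /andP [/forallP Hconn /forallP Hdis].
pose g i := [set x : T * bool | [exists p in f i, (x.2 == c p) && (x.1 \in P p)]].
have ing i p u : p \in f i -> u \in P p -> (u, c p) \in g i.
  by move=> Hp Hu; rewrite inE; apply/existsP; exists p; rewrite Hp /= eqxx Hu.
have inpath i p u u' : p \in f i -> u \in P p -> u' \in P p ->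
   connect (fun a b => [&& boxK2 e a b, a \in g i & b \in g i]) (u, c p) (u', c p).
  move=> Hp Hu Hu'.
  have := gP p; case E: (P p) => [|x s] //= /andP [_ ps].
  have H := @path_conn2 _ _ e (fun a b => [&& boxK2 e a b, a \in g i & b \in g i])
     (fun u => (u, c p)) x s ps.
  have H' : forall a b, a \in x :: s -> b \in x :: s -> e a b ->
     [&& boxK2 e (a, c p) (b, c p), (a, c p) \in g i & (b, c p) \in g i] &&
     [&& boxK2 e (b, c p) (a, c p), (b, c p) \in g i & (a, c p) \in g i].
    move=> a b Ha Hb eab; rewrite -E in Ha Hb.
    by rewrite /boxK2 /= eqxx eab esym eab !ing.
  rewrite E in Hu Hu'.
  have /andP [_ C1] := H H' u Hu; have /andP [C2 _] := H H' u' Hu'.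
  exact: connect_trans C1 C2.
apply/existsP; exists [ffun i => g i]; apply/andP; split.
  apply/forallP => i; rewrite ffunE.
  have /andP [/set0Pn [p0 Hp0] /forallP Hc0] := Hconn i.
  apply/andP; split.
    apply/set0Pn; have := gP p0; case E: (P p0) => [|x s] // _.
    exists (x, c p0); apply: ing => //; by rewrite E inE eqxx.
  apply/forallP => [[u b]]; apply/implyP; rewrite inE => /existsP [p /and3P [Hp /eqP /= -> Hu]].
  apply/forallP => [[u' b']]; apply/implyP; rewrite inE => /existsP [q /and3P [Hq /eqP /= -> Hu']].
  have := implyP (forallP (implyP (Hc0 p) Hp) q) Hq.
  move/connectP=> [s ps lasts].
  elim: s p u Hp Hu ps lasts => [|z s IH] p u Hp Hu /=.
    by move=> _ Eq; subst q; exact: inpath.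
  case/andP=> /and3P [apz _ Hz] ps lasts.
  have [v Hvp Hvz] := share _ _ apz.
  apply: connect_trans (inpath i p u v Hp Hu Hvp) _.
  apply: connect_trans _ (IH z v Hz Hvz ps lasts).
  apply: connect1; rewrite /boxK2 /= eqxx /= !ing //=.
  by have := Hc _ _ apz; rewrite eq_sym => ->; rewrite orbT.
apply/forallP => i; apply/forallP => j; apply/implyP => nij.
have /andP [dij /existsP [p /andP [Hp /existsP [q /andP [Hq apq]]]]] :=
  implyP (forallP (Hdis i) j) nij.
rewrite !ffunE; apply/andP; split.
  rewrite -setI_eq0; apply/eqP/setP => [[u b]]; rewrite !inE.
  apply/negbTE/negP => /andP [/existsP [p' /and3P [Hp' /eqP /= Eb Hu]]
                             /existsP [q' /and3P [Hq' /eqP /= Eb' Hu']]].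
  have npq : p' != q'.
    apply/negP => /eqP Epq; subst q'.
    by move: dij => /disjoint_setI0 /setP /(_ p'); rewrite !inE Hp' Hq'.
  have : adj p' q' by rewrite /adj npq /=; apply/hasP; exists u.
  by move/Hc; rewrite -Eb Eb' eqxx.
have [v Hvp Hvq] := share _ _ apq.
apply/existsP; exists (v, c p); rewrite ing //=.
apply/existsP; exists (v, c q); rewrite ing //=.
by rewrite /boxK2 /= eqxx /= Hc // orbT.
Qed.

Local Open Scope ring_scope.

Lemma sum_card_part (I J : finType) (F : I -> J) (Q : pred J) :
  (\sum_(Y in F @: setT | Q Y) #|[set i | F i == Y]| = #|[set i | Q (F i)]|)%N.
Proof.
rewrite -sum1_card.
rewrite (partition_big F (fun Y => (Y \in F @: setT) && Q Y)); last first.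
  by move=> i; rewrite inE => HQ; rewrite imset_f ?inE.
apply: eq_bigr => Y /andP [_ HQ].
rewrite -sum1_card; apply: eq_bigl => i; rewrite !inE.
by case E: (F i == Y); rewrite ?andbT ?andbF // (eqP E) HQ.
Qed.

Lemma proj_conn (T : finType) (e : rel T) (X : {set T * bool}) :
  connected_set (boxK2 e) X -> connected_set e [set x.1 | x in X].
Proof.
case/andP=> /set0Pn [x0 Hx0] /forallP Hc.
apply/andP; split.
  by apply/set0Pn; exists x0.1; rewrite imset_f.
apply/forallP => u; apply/implyP => /imsetP [a Ha ->].
apply/forallP => v; apply/implyP => /imsetP [b Hb ->].
have := forallP (implyP (Hc a) Ha) b; move/implyP/(_ Hb).
apply: conn_map => p q /and3P [Hpq Hp Hq].
move: Hpq; rewrite /boxK2 => /orP [/andP [_ epq] | /andP [/eqP -> _]].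
  by apply: connect1; rewrite epq !imset_f.
exact: connect0.
Qed.

Lemma card_in_le1 (U : finType) (t : nat) (f : 'I_t -> {set U}) x :
  (forall i j, i != j -> [disjoint f i & f j]) ->
  (#|[set i | x \in f i]| <= 1)%N.
Proof.
move=> Hd; apply/card_le1P => i; rewrite inE => Hi j; rewrite !inE.
apply/idP/idP => [Hj|/eqP -> //].
apply/negPn/negP => nji.
by move: (Hd _ _ nji) => /disjoint_setI0 /setP /(_ x); rewrite !inE Hj Hi.
Qed.

Lemma bramble_sum_bound (R : realType) (T : finType) (e : rel T) B (w : {set T} -> R) :
  bramble_weight e B w -> \sum_(X in B) w X <= #|T|%:R.
Proof.
case=> [/andP [/forallP Hc _] [Hw Hl]].
apply: (@le_trans _ _ (\sum_(X in B) \sum_(v in X) w X)).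
  apply: ler_sum => X XB.
  rewrite sumr_const.
  have /andP [/set0Pn [x Hx] _] := implyP (Hc X) XB.
  have : (0 < #|X|)%N by apply/card_gt0P; exists x.
  case: #|X| => // n _; rewrite mulrS lerDl.
  by apply: mulrn_wge0; apply: Hw.
rewrite (exchange_big_dep predT) //=.
apply: (@le_trans _ _ (\sum_(v : T) (1 : R))).
  by apply: ler_sum => v _; apply: Hl.
by rewrite sumr_const -mulr_natl mulr1.
Qed.

Lemma proj_bramble (R : realType) (T : finType) (e : rel T) (esym : symmetric e)
  t r k0 : (0 < r)%N -> (2 * k0 <= r)%N -> Kt_minor (boxK2 e) t ->
  exists B (w : {set T} -> R), bramble_weight e B w /\
    (forall X, X \in B -> exists k : nat, w X = k%:R / r%:R) /\
    (t * k0)%:R / r%:R = \sum_(X in B) w X.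
Proof.
move=> r0 rk /existsP [f /andP [/forallP Hc /forallP Hd]].
have Hdis i j : i != j -> [disjoint f i & f j].
  by move=> nij; case/andP: (implyP (forallP (Hd i) j) nij).
pose F i := [set x.1 | x in f i].
pose B := F @: setT.
pose n Y := #|[set i | F i == Y]|.
pose c : R := k0%:R / r%:R.
have r0' : (0 : R) < r%:R by rewrite ltr0n.
have c0 : 0 <= c by rewrite divr_ge0.
exists B, (fun Y => (n Y)%:R * c); split; [split; [|split]|split].
- apply/andP; split.
    apply/forallP => X; apply/implyP => /imsetP [i _ ->]; exact: proj_conn.
  apply/forallP => X; apply/implyP => /imsetP [i _ ->].
  apply/forallP => Y; apply/implyP => /imsetP [j _ ->].
  have [-> | nij] := eqVneq i j.
    have /andP [/set0Pn [x Hx] _] := Hc j.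
    by apply/existsP; exists x.1; rewrite imset_f //=; apply/existsP; exists x.1; rewrite imset_f ?eqxx.
  have /andP [_ /existsP [x /andP [Hx /existsP [y /andP [Hy exy]]]]] := implyP (forallP (Hd i) j) nij.
  apply/existsP; exists x.1; rewrite imset_f //=; apply/existsP; exists y.1; rewrite imset_f //=.
  move: exy; rewrite /boxK2 => /orP [/andP [_ ->] | /andP [/eqP -> _]]; by rewrite ?eqxx ?orbT.
- by move=> X _; rewrite mulr_ge0.
- move=> v.
  rewrite -mulr_suml -natr_sum sum_card_part.
  have le2 : (#|[set i | v \in F i]| <= 2)%N.
    have sub : [set i | v \in F i] \subset [set i | (v, true) \in f i] :|: [set i | (v, false) \in f i].
      apply/fintype.subsetP => i; rewrite !inE => /imsetP [[u b] Hub /= ->].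
      by case: b Hub => ->; rewrite ?orbT.
    apply: leq_trans (subset_leq_card sub) _.
    apply: leq_trans (leq_card_setU _ _).1 _.
    by rewrite -[2%N]/(1 + 1)%N leq_add // card_in_le1.
  apply: (@le_trans _ _ (2%:R * c)).
    by apply: ler_wpM2r => //; rewrite ler_nat.
  rewrite /c mulrA ler_pdivrMr // mul1r -natrM ler_nat //.
- move=> X /imsetP [i _ ->]; exists (n (F i) * k0)%N.
  by rewrite /c natrM mulrA.
- rewrite -mulr_suml -natr_sum.
  have := sum_card_part F predT.
  rewrite (eq_bigl (fun Y => Y \in B)); last by move=> Y; rewrite andbT.
  move=> ->; rewrite /c natrM mulrA.
  by rewrite cardsT card_ord.
Qed.

Unset Implicit Arguments. Set Strict Implicit.

Theorem lemma20 (R : realType) (T : finType) (e : rel T)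
  (esym : symmetric e) (eirr : irreflexive e) (r : nat) (hr : (2 <= r)%N) :
  glm R e <= (had (boxK2 e))%:R /\
  (had (boxK2 e))%:R <= 3 * had_r R e r /\
  (~~ odd r ->
     (had (boxK2 e))%:R <= 2 * had_r R e r /\
     2 * had_r R e r <= 2 * had_f R e).
Proof.
set t := had (boxK2 e).
have r0 : (0 < r)%N by apply: leq_trans hr.
have r0' : (0 : R) < r%:R by rewrite ltr0n.
pose k0 := r./2.
have hk : (2 * k0 <= r)%N.
  by have := odd_double_half r; rewrite -/k0 -mul2n; case: (odd r) => /= <-; lia.
have [B [w [Hbw [Hm Hs]]]] := @proj_bramble R _ _ esym _ _ _ r0 hk (had_attained (boxK2 e)).
pose A := [set h : R | exists (B : {set {set T}}) (w : {set T} -> R),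
         bramble_weight e B w /\
         (forall X, X \in B -> exists k : nat, w X = k%:R / r%:R) /\
         h = \sum_(X in B) w X]%classic.
have ubA : has_ubound A.
  by exists #|T|%:R => h [B' [w' [H1 [_ ->]]]]; exact: bramble_sum_bound H1.
have inA : A ((t * k0)%:R / r%:R) by exists B, w.
have lehr : (t * k0)%:R / r%:R <= had_r R e r := ub_le_sup ubA inA.
split; [|split].
- apply: ge_sup.
    exists 0%:R, 0%N; split => //.
    exists 0%N, (fun _ => [::]); split; first by case.
    split; first by case.
    split; first by exists (fun _ => true); case.
    apply/existsP; exists [ffun i : 'I_0 => (finset.set0 : {set 'I_0})].
    by apply/andP; split; apply/forallP => [[]].
  move=> x [n [Hn ->]]; rewrite ler_nat.
  exact: Kt_le_had (glm_part esym Hn).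
- apply: le_trans (_ : 3 * ((t * k0)%:R / r%:R) <= _); last first.
    by rewrite ler_wpM2l.
  rewrite mulrA ler_pdivlMr // -!natrM ler_nat.
  have := odd_double_half r; rewrite -/k0 -mul2n.
  clearbody k0 t.
  case: (odd r) => Hr.
    have k1 : (1 <= k0)%N by move: Hr; lia.
    move: Hr k1; clear; move=> <- k1; nia.
  move: Hr; clear; move=> <-; nia.
- move=> ev; split.
    apply: le_trans (_ : 2 * ((t * k0)%:R / r%:R) <= _); last first.
      by rewrite ler_wpM2l.
    rewrite mulrA ler_pdivlMr // -!natrM ler_nat.
    have := odd_double_half r; rewrite -/k0 -mul2n (negbTE ev) /=; nia.
  rewrite ler_wpM2l //.
  apply: sup_le.
  - move=> h [B' [w' [H1 [_ ->]]]].
    exists (\sum_(X in B') w' X); split => //.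
    by exists B', w'.
  - exists 0, finset.set0, (fun _ => 0); split; [|split => //; last by rewrite big_set0].
      split; [apply/andP; split; apply/forallP => X; rewrite inE //|split => //].
      by move=> v; rewrite big1.
    by move=> X; rewrite inE.
  - split.
      exists 0, finset.set0, (fun _ => 0); split; last by rewrite big_set0.
      split; [apply/andP; split; apply/forallP => X; rewrite inE //|split => //].
      by move=> v; rewrite big1.
    by exists #|T|%:R => h [B' [w' [H1 ->]]]; exact: bramble_sum_bound H1.
Qed.
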